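(* Let $a,b\in\mathbb{Q}_3$ with $\gamma(a)=1$, $\gamma(b)=0$, and let $x=\sum_{t\ge0}x_t3^t\in\mathbb{Z}_3^*$ be such that $A_k\equiv0\pmod3$ for all $k\in\mathbb{N}$. Then $x$ is a solution of $x^3+ax=b$ if and only if the digits of $x$ satisfy the system of congruences $$x_0^3\equiv b_0\pmod3,\qquad x_0a_0+M_1(x_0)\equiv b_1\pmod3,$$ and for every $j\ge1$, $$x_{j-1}a_j+x_{j-2}a_{j+1}+\dots+x_0a_{2j-1}+S_{2j}^j+M_{2j}(x_0,\dots,x_{j-1})\equiv b_{2j}\pmod3,$$ $$(A_j-x_0x_j)x_j+x_{j-1}a_{j+1}+x_{j-2}a_{j+2}+\dots+x_0a_{2j}+S_{2j+1}^j+M_{2j+1}(x_0,\dots,x_{j-1})\equiv b_{2j+1}\pmod3,$$ where the integers $M$ are defined by $$3M_1(x_0)=x_0^3-b_0,\qquad 3M_2(x_0)=x_0a_0+M_1(x_0)-b_1,$$ $$3M_{2j+1}(x_0,\dots,x_{j-1})=x_{j-1}a_j+\dots+x_0a_{2j-1}+S_{2j}^j+M_{2j}(x_0,\dots,x_{j-1})-b_{2j},$$ $$3M_{2j+2}(x_0,\dots,x_j)=(A_j-x_0x_j)x_j+x_{j-1}a_{j+1}+\dots+x_0a_{2j}+S_{2j+1}^j+M_{2j+1}(x_0,\dots,x_{j-1})-b_{2j+1}.$$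
   Context: Write $a=3^{\gamma(a)}(a_0+a_13+a_23^2+\dots)$, $b=3^{\gamma(b)}(b_0+b_13+b_23^2+\dots)$ in canonical form, with digits $a_j,b_j\in\{0,1,2\}$, $a_0,b_0\ne0$, $\gamma(a),\gamma(b)\in\mathbb{Z}$. $\mathbb{Z}_3^*$ is the set of $3$-adic units; $x\in\mathbb{Z}_3^*$ is written $x=x_0+x_13+x_23^2+\dots$ with $x_j\in\{0,1,2\}$, $x_0\ne0$. Define $A_0=x_0^2+a_0$ and, for $k\ge1$, $A_k=\frac{A_{k-1}}{3}+a_k+R_k$ with $R_k=\sum_{j=0}^kx_jx_{k-j}$. For $j\le k$, $P_k^j(x_0,\dots,x_{j-1})=\sum\frac{6}{m_0!\cdots m_{j-1}!}x_0^{m_0}\cdots x_{j-1}^{m_{j-1}}$, the sum over nonnegative integers $m_0,\dots,m_{j-1}$ with $\sum_{i=0}^{j-1}m_i=3$ and $\sum_{i=1}^{j-1}im_i=k$. For $s$ a positive integer define $$S_j^i=\begin{cases}\frac{P_{j-1}^i}{3}, & j=3s-1,\\ \frac{P_{j-1}^i}{3}+x_{j/3}^3, & j=3s,\\ \frac{P_{j-1}^i-x_{(j-1)/3}^3}{3}, & j=3s+1.\end{cases}$$ *)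

(* Defs.v *)
(* 3-adic numbers are represented by their canonical
   digit expansions (digits in {0,1,2}). *)
From mathcomp Require Import all_boot all_order all_algebra.
Set Implicit Arguments.
Unset Strict Implicit.
Unset Printing Implicit Defensive.
Import Order.TTheory GRing.Theory Num.Theory.
Local Open Scope ring_scope.

Definition digits3 (d : nat -> nat) : Prop := forall j, (d j < 3)%N.

Definition trunc3 (d : nat -> nat) (n : nat) : int :=
  \sum_(i < n) ((d i)%:Z * (3 ^+ i)).

(* Equality in Z_3 = inverse limit of Z/3^n: with
   a = 3^1 (a_0 + a_1 3 + ...), b = b_0 + b_1 3 + ..., x = x_0 + x_1 3 + ...,
   x^3 + a x = b holds iff it holds modulo 3^n for every n. *)
Definition solves_cubic3 (a b x : nat -> nat) : Prop :=
  forall n : nat,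
    (((3 ^+ n : int) %| (trunc3 x n ^+ 3 + 3 * trunc3 a n * trunc3 x n
                          - trunc3 b n))%Z).

Definition cong3 (u v : rat) : Prop := exists z : int, u - v = 3 * z%:~R.

Section Quantities.
Variables (a b x : nat -> nat).
Local Notation "'x_ i" := ((x i)%:R : rat) (at level 8, i at level 2).
Local Notation "'a_ i" := ((a i)%:R : rat) (at level 8, i at level 2).
Local Notation "'b_ i" := ((b i)%:R : rat) (at level 8, i at level 2).

Definition Rk (k : nat) : rat := \sum_(0 <= j < k.+1) 'x_j * 'x_(k - j).

Fixpoint Ak (k : nat) : rat :=
  match k with
  | 0 => 'x_0 ^+ 2 + 'a_0
  | k'.+1 => Ak k' / 3 + 'a_(k'.+1) + Rk k'.+1
  end.

(* P_k^j(x_0,...,x_{j-1}) = sum over m_0..m_{j-1} >= 0 with sum m_i = 3,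
   sum i m_i = k of 6/(m_0!...m_{j-1}!) x_0^{m_0}...x_{j-1}^{m_{j-1}}.
   (The constraint sum m_i = 3 forces m_i <= 3, so m ranges over 'I_4.) *)
Definition Pkj (k j : nat) : rat :=
  \sum_(m : {ffun 'I_j -> 'I_4} |
          ((\sum_(i < j) (m i : nat))%N == 3%N) &&
          ((\sum_(i < j) (i * m i)%N)%N == k))
     (6 / (\prod_(i < j) ((m i)`!)%:R) * \prod_(i < j) 'x_i ^+ (m i)).

Definition Sji (j i : nat) : rat :=
  if (j %% 3 == 2)%N then Pkj j.-1 i / 3
  else if (j %% 3 == 0)%N then Pkj j.-1 i / 3 + 'x_(j %/ 3) ^+ 3
  else (Pkj j.-1 i - 'x_(j.-1 %/ 3) ^+ 3) / 3.

Definition Eeven (j : nat) : rat :=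
  \sum_(1 <= i < j.+1) 'x_(j - i) * 'a_(j + i - 1).

Definition Eodd (j : nat) : rat :=
  \sum_(1 <= i < j.+1) 'x_(j - i) * 'a_(j + i).

(* the left-hand side of the n-th congruence, without the M_n term:
   n = 0: x_0^3;  n = 1: x_0 a_0;
   n = 2j: x_{j-1}a_j+...+x_0a_{2j-1} + S_{2j}^j;
   n = 2j+1: (A_j - x_0 x_j) x_j + x_{j-1}a_{j+1}+...+x_0a_{2j} + S_{2j+1}^j *)
Definition Lhs (n : nat) : rat :=
  if n is 0 then 'x_0 ^+ 3
  else if n is 1 then 'x_0 * 'a_0
  else if ~~ odd n then Eeven n./2 + Sji n n./2
  else (Ak n./2 - 'x_0 * 'x_(n./2)) * 'x_(n./2) + Eodd n./2 + Sji n n./2.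

(* M_0 := 0 (convention), 3 M_{n+1} = Lhs n + M_n - b_n, i.e.
   3M_1 = x_0^3 - b_0, 3M_2 = x_0a_0 + M_1 - b_1,
   3M_{2j+1} = ... + S_{2j}^j + M_{2j} - b_{2j},
   3M_{2j+2} = (A_j - x_0x_j)x_j + ... + S_{2j+1}^j + M_{2j+1} - b_{2j+1}. *)
Fixpoint Mn (n : nat) : rat :=
  match n with
  | 0 => 0
  | n'.+1 => (Lhs n' + Mn n' - 'b_n') / 3
  end.

End Quantities.

(* Main.v *)
Require Import Defs.
From mathcomp Require Import all_boot all_order all_algebra.
From mathcomp Require Import ring lra zify.
Import Order.TTheory GRing.Theory Num.Theory.
Set Implicit Arguments. Unset Strict Implicit. Unset Printing Implicit Defensive.
Local Open Scope ring_scope.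


Section Multi.
Local Notation PT := {poly rat}.

Definition Eexp (y : PT) : {poly PT} :=
  \sum_(c < 4) (((c`!)%:R : rat)^-1 *: y ^+ c) *: 'X^c.

Lemma coef_Eexp (y : PT) (c : nat) :
  (c < 4)%N -> (Eexp y)`_c = ((c`!)%:R : rat)^-1 *: y ^+ c.
Proof.
move=> hc; rewrite /Eexp coef_sum (bigD1 (Ordinal hc)) //= coefZ coefXn eqxx mulr1.
rewrite big1 ?addr0 // => i /negP hi; rewrite coefZ coefXn.
case: eqP => [e|]; last by rewrite mulr0.
by exfalso; apply: hi; apply/eqP/val_inj; rewrite /= e.
Qed.

Lemma prod_Eexp_coef (J : nat) (Y : nat -> PT) (r : nat) : (r < 4)%N ->
  (\prod_(i < J) Eexp (Y i))`_r = ((r`!)%:R : rat)^-1 *: (\sum_(i < J) Y i) ^+ r.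
Proof.
elim: J r => [|J IH] r hr.
  rewrite !big_ord0 coefC expr0n; case: r hr => [|r] _ /=; first by rewrite invr1 scale1r.
  by rewrite scaler0.
rewrite big_ord_recr big_ord_recr /= coefM.
rewrite addrC exprDn scaler_sumr; apply: eq_bigr => k _.
have hk : (k < 4)%N by apply: leq_ltn_trans hr; rewrite -ltnS.
have hrk : (r - k < 4)%N by apply: leq_ltn_trans hr; apply: leq_subr.
rewrite IH // coef_Eexp //.
rewrite -scalerAl -scalerAr scalerA -scaler_nat scalerA.
rewrite [_ ^+ k * _]mulrC; congr (_ *: _).
have hkr : (k <= r)%N by rewrite -ltnS.
have := bin_fact hkr => hb.
have h1 : ((k`!)%:R : rat) != 0 by rewrite pnatr_eq0 -lt0n fact_gt0.
have h2 : (((r - k)`!)%:R : rat) != 0 by rewrite pnatr_eq0 -lt0n fact_gt0.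
have h3 : ((r`!)%:R : rat) != 0 by rewrite pnatr_eq0 -lt0n fact_gt0.
have -> : (('C(r, k))%:R : rat) = (r`!)%:R / ((k`!)%:R * ((r-k)`!)%:R).
  by rewrite -hb !natrM; field; rewrite h1 h2.
by field; rewrite h1 h2 h3.
Qed.
End Multi.


Definition XP (x : nat -> nat) (J : nat) : {poly rat} :=
  \sum_(i < J) ((x i)%:R : rat) *: 'X^i.

Lemma Pkj_coef (x : nat -> nat) (s J : nat) : Pkj x s J = (XP x J ^+ 3)`_s.
Proof.
pose Y := fun i : nat => ((x i)%:R : rat) *: ('X^i : {poly rat}).
have h := prod_Eexp_coef J Y (isT : (3 < 4)%N).
have -> : XP x J ^+ 3 = 6%:R *: (\prod_(i < J) Eexp (Y i))`_3.
  by rewrite h scalerA /= -[XP x J]/(\sum_(i < J) Y i) mulfV ?scale1r.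
rewrite /Eexp bigA_distr_bigA /= coef_sum coefZ coef_sum mulr_sumr.
rewrite /Pkj big_mkcondr /= big_mkcond /=.
apply: eq_bigr => f _.
rewrite scaler_prod prodrXr coefZ coefXn eq_sym.
case: eqP => [e3|ne]; last by rewrite mulr0 coef0 mulr0.
rewrite mulr1.
have -> : \prod_(i < J) (((f i)`!%:R : rat)^-1 *: Y i ^+ f i) =
   \prod_(i < J) ((((f i)`!%:R : rat)^-1 * (x i)%:R ^+ f i) *: 'X^(i * f i)).
  apply: eq_bigr => i _; rewrite /Y exprZn scalerA exprM //.
rewrite scaler_prod prodrXr coefZ coefXn eq_sym.
case: eqP => [es|nes]; last by rewrite mulr0 mulr0.
rewrite mulr1 big_split /= prodfV mulrA //.
Qed.


Definition isZ (v : rat) := exists z : int, v = z%:~R.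

Lemma isZ_int (z : int) : isZ z%:~R. Proof. by exists z. Qed.
Lemma isZ_nat (n : nat) : isZ n%:R. Proof. by exists n%:Z. Qed.
Lemma isZ0 : isZ 0. Proof. by exists 0. Qed.
Lemma isZ_add u v : isZ u -> isZ v -> isZ (u + v).
Proof. by move=> [z ->] [w ->]; exists (z + w); rewrite rmorphD. Qed.
Lemma isZ_opp u : isZ u -> isZ (- u).
Proof. by move=> [z ->]; exists (- z); rewrite rmorphN. Qed.
Lemma isZ_sub u v : isZ u -> isZ v -> isZ (u - v).
Proof. by move=> hu hv; apply: isZ_add => //; apply: isZ_opp. Qed.
Lemma isZ_mul u v : isZ u -> isZ v -> isZ (u * v).
Proof. by move=> [z ->] [w ->]; exists (z * w); rewrite rmorphM. Qed.
Lemma isZ_exp u n : isZ u -> isZ (u ^+ n).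
Proof. by move=> [z ->]; exists (z ^+ n); rewrite rmorphXn. Qed.
Lemma isZ_sum (I : Type) (r : seq I) (P : pred I) (F : I -> rat) :
  (forall i, P i -> isZ (F i)) -> isZ (\sum_(i <- r | P i) F i).
Proof.
move=> h; apply: (big_ind isZ) => //; [exact: isZ0 | exact: isZ_add].
Qed.

Definition dv (N : nat) (v : rat) := exists z : int, v = 3%:R ^+ N * z%:~R.

Lemma dv0 N : dv N 0. Proof. by exists 0; rewrite mulr0. Qed.
Lemma dv_add N u v : dv N u -> dv N v -> dv N (u + v).
Proof. by move=> [z ->] [w ->]; exists (z + w); rewrite rmorphD mulrDr. Qed.
Lemma dv_opp N u : dv N u -> dv N (- u).
Proof. by move=> [z ->]; exists (- z); rewrite rmorphN mulrN. Qed.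
Lemma dv_sub N u v : dv N u -> dv N v -> dv N (u - v).
Proof. by move=> hu hv; apply: dv_add => //; apply: dv_opp. Qed.
Lemma dv_sum N (I : Type) (r : seq I) (P : pred I) (F : I -> rat) :
  (forall i, P i -> dv N (F i)) -> dv N (\sum_(i <- r | P i) F i).
Proof.
move=> h; apply: (big_ind (dv N)) => //; [exact: dv0 | exact: dv_add].
Qed.
Lemma dv_pow N k u : (N <= k)%N -> isZ u -> dv N (3%:R ^+ k * u).
Proof.
move=> hk [z ->]; exists (3 ^+ (k - N) * z).
by rewrite rmorphM rmorphXn /= mulrA -exprD subnKC.
Qed.

Definition intpoly (p : {poly rat}) := forall i, isZ p`_i.

Lemma intpoly_add p q : intpoly p -> intpoly q -> intpoly (p + q).
Proof. by move=> hp hq i; rewrite coefD; apply: isZ_add. Qed.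
Lemma intpoly_mul p q : intpoly p -> intpoly q -> intpoly (p * q).
Proof.
move=> hp hq i; rewrite coefM; apply: isZ_sum => j _; exact: isZ_mul.
Qed.
Lemma intpoly_exp p n : intpoly p -> intpoly (p ^+ n).
Proof.
move=> hp; elim: n => [|n IH]; last by rewrite exprS; apply: intpoly_mul.
by move=> i; rewrite expr0 coefC; case: (i == 0)%N; [apply: (isZ_nat 1) | exact: isZ0].
Qed.
Lemma intpoly_XP x J : intpoly (XP x J).
Proof.
move=> i; rewrite /XP coef_sum; apply: isZ_sum => k _.
rewrite coefZ coefXn; apply: isZ_mul; apply: isZ_nat.
Qed.
Lemma intpoly_Z p (u : rat) : isZ u -> intpoly p -> intpoly (u *: p).
Proof. by move=> hu hp i; rewrite coefZ; apply: isZ_mul. Qed.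

Lemma coef_XP x J i : (XP x J)`_i = if (i < J)%N then (x i)%:R else 0.
Proof.
rewrite /XP coef_sum; case: ifP => hi.
  rewrite (bigD1 (Ordinal hi)) //= coefZ coefXn eqxx mulr1 big1 ?addr0 //.
  move=> k /negP hk; rewrite coefZ coefXn; case: eqP => [e|]; last by rewrite mulr0.
  by exfalso; apply: hk; apply/eqP/val_inj; rewrite /= e.
rewrite big1 // => k _; rewrite coefZ coefXn; case: eqP => [e|]; last by rewrite mulr0.
by move: hi; rewrite e ltn_ord.
Qed.

Lemma XP_S x J : XP x J.+1 = XP x J + (x J)%:R *: 'X^J.
Proof. by rewrite /XP big_ord_recr. Qed.

Lemma mod3_c3 x J s : exists z : int,
  ((XP x J ^+ 3)`_s) - (if (modn s 3 == 0)%N && (divn s 3 < J)%N then (x (divn s 3))%:R ^+ 3 else 0)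
  = 3%:R * z%:~R.
Proof.
elim: J => [|J [z hz]].
  exists 0; rewrite /XP big_ord0 expr0n /= coef0 andbF; by rewrite subr0 mulr0.
set p := XP x J; set q := (x J)%:R *: ('X^J : {poly rat}).
have e : (XP x J.+1) ^+ 3 = p ^+ 3 + q ^+ 3 + (p ^+ 2 * q + p * q ^+ 2) *+ 3.
  rewrite XP_S -/p -/q; ring.
have hW : intpoly (p ^+ 2 * q + p * q ^+ 2).
  have hp : intpoly p by apply: intpoly_XP.
  have hq : intpoly q by apply: intpoly_Z; [apply: isZ_nat | move=> i; rewrite coefXn; apply: isZ_nat].
  by apply: intpoly_add; apply: intpoly_mul => //; apply: intpoly_exp.
have [w hw] := hW s.
exists (z + w).
rewrite e coefD coefD coefMn /q exprZn -exprM coefZ coefXn.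
have -> : (if (modn s 3 == 0)%N && (divn s 3 < J.+1)%N then (x (divn s 3))%:R ^+ 3 else 0 : rat)
   = (if (modn s 3 == 0)%N && (divn s 3 < J)%N then (x (divn s 3))%:R ^+ 3 else 0)
     + (x J)%:R ^+ 3 * (s == J * 3)%N%:R.
  case: (eqVneq s (J * 3)) => [->|ne].
    by rewrite modnMl mulnK //= ltnn ltnSn add0r mulr1.
  rewrite mulr0 addr0; congr (if _ then _ else _).
  by apply/idP/idP => /andP [h1 h2]; apply/andP; split => //; lia.
rewrite -/p in hz *; rewrite -/q hw rmorphD /= -mulr_natl.
move: hz; set c := (if _ then _ else _); set d := (p ^+ 3)`_s => hz.
rewrite -[d](subrK c) hz; ring.
Qed.


Lemma sum_range (F : nat -> rat) (a N : nat) : (a <= N)%N ->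
  \sum_(a <= m < N) F m = \sum_(m < N) (if (a <= m)%N then F m else 0).
Proof.
move=> haN; rewrite -(big_mkord xpredT (fun m => if (a <= m)%N then F m else 0)).
rewrite (big_cat_nat (leq0n a) haN) /= [X in _ = X + _]big1_seq ?add0r; last first.
  by move=> i /andP [_]; rewrite mem_index_iota => /andP [_ h]; rewrite leqNgt h.
apply: eq_big_nat => i /andP [h _]; by rewrite h.
Qed.

Lemma sum_shift (F : nat -> rat) (m n : nat) :
  \sum_(s < m + n) (if (m <= s)%N then F s else 0) = \sum_(k < n) F (m + k).
Proof.
rewrite big_split_ord /= big1 ?add0r; last first.
  by move=> i _; rewrite /= leqNgt ltn_ord.
by apply: eq_bigr => i _; rewrite /= leq_addr.
Qed.

Lemma sum_widen (F : nat -> rat) (n N : nat) : (n <= N)%N ->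
  \sum_(s < N) (if (s < n)%N then F s else 0) = \sum_(s < n) F s.
Proof.
move=> h; rewrite -(big_mkord xpredT (fun s => if (s < n)%N then F s else 0)).
rewrite (big_cat_nat (leq0n n) h) /= [X in _ + X]big1_seq ?addr0; last first.
  by move=> i /andP [_]; rewrite mem_index_iota => /andP [h1 _]; rewrite ltnNge h1.
rewrite big_mkord; apply: eq_bigr => i _; by rewrite ltn_ord.
Qed.

Lemma half_bound n : (n <= 2 * n./2 + 1)%N /\ (2 * n./2 <= n)%N.
Proof.
rewrite mul2n; have := odd_double_half n; set h := n./2.*2.
case: (odd n) => /= e; split; lia.
Qed.

Section Core.
Variables (a b x : nat -> nat).
Local Notation xr i := ((x i)%:R : rat).
Local Notation ar i := ((a i)%:R : rat).

Definition T N := \sum_(i < N) xr i * 3%:R ^+ i.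
Definition U N := \sum_(i < N) ar i * 3%:R ^+ i.
Definition Rpre m := \sum_(k < m.+1) Rk x k * 3%:R ^+ k.
Definition c3 J s := (XP x J ^+ 3)`_s.

Lemma A_closed m : 3%:R ^+ m * Ak a x m = U m.+1 + Rpre m.
Proof.
elim: m => [|m IH].
  rewrite /U /Rpre /Rk !big_ord_recr !big_ord0 /= big_nat1 /=; ring.
move: IH; rewrite /U /Rpre => IH.
rewrite /= big_ord_recr [X in _ = _ + X]big_ord_recr /=.
rewrite addrACA -IH exprS; by field.
Qed.

Lemma T_horner N : (XP x N).[3%:R] = T N.
Proof.
rewrite /XP horner_sum; apply: eq_bigr => i _; by rewrite hornerZ hornerXn.
Qed.

Lemma size_XP N : (size (XP x N) <= N)%N.
Proof. by rewrite (_ : XP x N = \poly_(i < N) xr i) ?size_poly // /XP poly_def. Qed.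

Lemma T3_coef N : T N ^+ 3 = \sum_(s < (3 * N).+1) c3 N s * 3%:R ^+ s.
Proof.
rewrite -T_horner -horner_exp (horner_coef_wide _ (n := (3 * N).+1)) //.
apply: leq_trans (size_poly_exp_leq _ _) _; rewrite ltnS.
have := size_XP N; case: (size (XP x N)) => [|k] /= hk; first by rewrite mul0n.
by rewrite mulnC leq_mul2l /=; apply: leq_trans hk.
Qed.

Lemma coef_XP2 m k : (k <= m)%N -> ((XP x m.+1) ^+ 2)`_k = Rk x k.
Proof.
move=> hk; rewrite expr2 coefM /Rk big_mkord; apply: eq_bigr => j _.
rewrite !coef_XP.
have h1 : (j < m.+1)%N by apply: leq_trans (ltn_ord j) _.
have h2 : (k - j < m.+1)%N by rewrite ltnS; apply: leq_trans (leq_subr _ _) hk.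
by rewrite h1 h2.
Qed.

Lemma delta_formula m s : (s <= 2 * m)%N ->
  c3 m.+1 s - c3 m s =
    (if (m <= s)%N then 3%:R * xr m * Rk x (s - m) else 0)
    - (if s == (2 * m)%N then 3%:R * xr m ^+ 2 * xr 0 else 0)
    + (if (s == 0)%N && (m == 0)%N then xr 0 ^+ 3 else 0).
Proof.
move=> hs.
set p := XP x m.+1; set q := xr m *: ('X^m : {poly rat}).
have e : XP x m = p - q by rewrite /p XP_S addrK.
have e2 : p ^+ 3 - XP x m ^+ 3 = (p ^+ 2 * q) *+ 3 - (p * q ^+ 2) *+ 3 + q ^+ 3.
  by rewrite e; ring.
rewrite /c3 -/p -coefB e2 coefD coefB !coefMn.
have -> : (p ^+ 2 * q)`_s = if (m <= s)%N then xr m * Rk x (s - m) else 0.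
  rewrite /q -scalerAr coefZ coefMXn; case: (ltnP s m) => h; first by rewrite mulr0.
  rewrite coef_XP2 //; lia.
have -> : (p * q ^+ 2)`_s = if s == (2 * m)%N then xr m ^+ 2 * xr 0 else 0.
  rewrite /q exprZn -exprM -scalerAr coefZ coefMXn.
  case: ltnP => h.
    have -> : (s == 2 * m)%N = false by apply/eqP; lia.
    by rewrite mulr0.
  have -> : s = (2 * m)%N by lia.
  rewrite eqxx mulnC subnn coef_XP //.
have -> : (q ^+ 3)`_s = if (s == 0)%N && (m == 0)%N then xr 0 ^+ 3 else 0.
  rewrite /q exprZn -exprM coefZ coefXn.
  case: (eqVneq s 0) => [->|hs0]; case: (eqVneq m 0) => [->|hm0] /=.
  1: by rewrite mulr1.
  1-3: rewrite (_ : (_ == _ * 3)%N = false) ?mulr0 //; apply/eqP; lia.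
case: ifP => h1; case: ifP => h2; ring.
Qed.

Lemma sum_indic_last (F : nat -> rat) n :
  \sum_(s < n.+1) (if nat_of_ord s == n then F s else 0) = F n.
Proof.
rewrite big_ord_recr /= eqxx big1 ?add0r // => i _.
by rewrite (ltn_eqF (ltn_ord i)).
Qed.

Lemma block_m m :
  \sum_(s < (2 * m).+1) (c3 m.+1 s - c3 m s) * 3%:R ^+ s =
  3%:R * xr m * 3%:R ^+ m * Rpre m - 3%:R ^+ (2 * m).+1 * xr m ^+ 2 * xr 0
  + (if m == 0%N then xr 0 ^+ 3 else 0).
Proof.
rewrite (eq_bigr (fun s : 'I_(2 * m).+1 =>
    (if (m <= s)%N then 3%:R * xr m * Rk x (s - m) * 3%:R ^+ s else 0)
    - (if nat_of_ord s == (2 * m)%N then 3%:R * xr m ^+ 2 * xr 0 * 3%:R ^+ s else 0)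
    + (if (nat_of_ord s == 0)%N && (m == 0)%N then xr 0 ^+ 3 * 3%:R ^+ s else 0))); last first.
  move=> s _; rewrite delta_formula; last by rewrite -ltnS.
  by rewrite mulrDl mulrBl; do 3 (case: ifP => _); rewrite ?mul0r.
rewrite big_split big_split /= sumrN.
congr (_ - _ + _).
- have -> : (2 * m).+1 = (m + m.+1)%N by lia.
  rewrite (sum_shift (fun s => 3%:R * xr m * Rk x (s - m) * 3%:R ^+ s)) /Rpre mulr_sumr; apply: eq_bigr => k _.
  rewrite addKn exprD; ring.
- by rewrite (sum_indic_last (fun s => 3%:R * xr m ^+ 2 * xr 0 * 3%:R ^+ s)) (exprS _ (2 * m)); ring.
- case: (eqVneq m 0) => [->|hm].
    rewrite muln0 big_ord_recr big_ord0 /= add0r expr0 mulr1; done.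
  by apply: big1 => s _; rewrite andbF.
Qed.

Lemma T3_decomp N :
  T N ^+ 3 = \sum_(m < N) (3%:R * xr m * 3%:R ^+ m * Rpre m
                 - 3%:R ^+ (2 * m).+1 * xr m ^+ 2 * xr 0 + (if nat_of_ord m == 0%N then xr 0 ^+ 3 else 0))
     + \sum_(s < (3 * N).+1) c3 (minn N (s.+1)./2) s * 3%:R ^+ s.
Proof.
rewrite T3_coef.
have step : forall s, c3 N s = c3 (minn N (s.+1)./2) s +
   \sum_(m < N) (if (minn N (s.+1)./2 <= m)%N then c3 m.+1 s - c3 m s else 0).
  move=> s; rewrite -(sum_range (fun m => c3 m.+1 s - c3 m s)) ?geq_minl // telescope_sumr ?geq_minl //.
  by rewrite addrC subrK.
rewrite (eq_bigr (fun s : 'I_(3 * N).+1 => c3 (minn N (s.+1)./2) s * 3%:R ^+ s +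
   \sum_(m < N) (if (minn N (s.+1)./2 <= m)%N then (c3 m.+1 s - c3 m s) * 3%:R ^+ s else 0)));
  last first.
  move=> s _; rewrite step mulrDl mulr_suml; congr (_ + _); apply: eq_bigr => m _.
  by case: ifP; rewrite ?mul0r.
rewrite big_split /= addrC; congr (_ + _).
rewrite exchange_big /=; apply: eq_bigr => m _.
rewrite -block_m -(sum_widen (fun s => (c3 m.+1 s - c3 m s) * 3%:R ^+ s) (n := (2 * m).+1) (N := (3 * N).+1)); last first.
  have := ltn_ord m; lia.
apply: eq_bigr => s _.
have hm := ltn_ord m.
have -> : (minn N (s.+1)./2 <= m)%N = (s < (2 * m).+1)%N.
  rewrite -divn2; apply/idP/idP => h; lia.
by [].
Qed.

Lemma UT_decomp N :
  3%:R * U N * T N = \sum_(m < N) 3%:R * xr m * 3%:R ^+ m * U m.+1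
   + \sum_(p < N) \sum_(q < N) (if (p < q)%N then 3%:R ^+ (p + q).+1 * xr p * ar q else 0).
Proof.
rewrite -mulrA [U N * T N]mulrC {1}/T big_distrl /= mulr_sumr -big_split /=.
apply: eq_bigr => p _.
rewrite /U mulr_sumr mulr_sumr mulr_sumr.
rewrite -(sum_widen (fun q => 3%:R * xr p * 3%:R ^+ p * (ar q * 3%:R ^+ q)) (N := N)); last by [].
rewrite -big_split /=; apply: eq_bigr => q _.
rewrite exprS exprD.
case: (ltnP q p.+1) => h.
  by rewrite addr0; ring.
by rewrite add0r; ring.
Qed.

Lemma c3_0 s : c3 0 s = 0.
Proof. by rewrite /c3 /XP big_ord0 expr0n /= coef0. Qed.

Definition alpha n := if odd n then 3%:R ^+ n * xr n./2 * (Ak a x n./2 - xr 0 * xr n./2) else 0.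
Definition beta n := 3%:R ^+ n * \sum_(p < n./2) xr p * ar (n.-1 - p).
Definition kap s := if (modn s 3 == 0)%N && (0 < s)%N then xr (divn s 3) ^+ 3 * 3%:R ^+ s else 0.
Definition gamma n := match n with
  | 0 => xr 0 ^+ 3
  | 1 => 0
  | _ => 3%:R ^+ n.-1 * c3 n./2 n.-1 + kap n - kap n.-1 end.

Lemma S_part n : (2 <= n)%N ->
  Sji x n n./2 * 3%:R ^+ n = 3%:R ^+ n.-1 * c3 n./2 n.-1 + kap n - kap n.-1.
Proof.
case: n => [|[|k]] // _.
rewrite /Sji Pkj_coef -/(c3 _ _) /kap /= (exprS _ k.+1).
case: (eqVneq (modn k.+2 3) 2) => h2.
  have -> : (modn k.+2 3 == 0)%N = false by apply/eqP; lia.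
  have -> : (modn k.+1 3 == 0)%N = false by apply/eqP; lia.
  by rewrite /= subr0 addr0; field.
case: (eqVneq (modn k.+2 3) 0) => h0.
  have -> : (modn k.+1 3 == 0)%N = false by apply/eqP; lia.
  by rewrite /= subr0; field.
have h1 : (modn k.+1 3 == 0)%N by apply/eqP; lia.
rewrite h1 /= addr0.
by field.
Qed.

Lemma Eeven_eq j : Eeven a x j = \sum_(p < j) xr p * ar ((2 * j).-1 - p).
Proof.
rewrite /Eeven big_add1 /= -(big_mkord xpredT (fun p => xr p * ar ((2 * j).-1 - p))).
rewrite (big_nat_rev _ _ 0 j) /=.
apply: eq_big_nat => i /andP [_ hi].
congr (_ * _); congr ((_ _)%:R); lia.
Qed.

Lemma Eodd_eq j : Eodd a x j = \sum_(p < j) xr p * ar (2 * j - p).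
Proof.
rewrite /Eodd big_add1 /= -(big_mkord xpredT (fun p => xr p * ar (2 * j - p))).
rewrite (big_nat_rev _ _ 0 j) /=.
apply: eq_big_nat => i /andP [_ hi].
congr (_ * _); congr ((_ _)%:R); lia.
Qed.

Lemma Lhs_split n : Lhs a x n * 3%:R ^+ n = alpha n + beta n + gamma n.
Proof.
case: n => [|[|k]].
- by rewrite /alpha /beta /gamma /= big_ord0 mulr0 expr0 mulr1 !add0r.
- rewrite /alpha /beta /gamma /= big_ord0 mulr0 addr0 expr1; ring.
have hS := S_part (n := k.+2) isT.
rewrite /Lhs /alpha /beta /gamma -hS.
set n := k.+2.
case: (boolP (odd n)) => ho /=.
  rewrite Eodd_eq (_ : (2 * n./2)%N = n.-1); last by rewrite mul2n odd_halfK.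
  ring.
rewrite Eeven_eq (_ : (2 * n./2)%N = n); last by rewrite mul2n even_halfK.
ring.
Qed.

Lemma sum_alpha N : \sum_(n < N) alpha n =
  \sum_(m < N./2) 3%:R ^+ (2 * m).+1 * xr m * (Ak a x m - xr 0 * xr m).
Proof.
elim: N => [|N IH]; first by rewrite !big_ord0.
rewrite big_ord_recr /= IH /alpha uphalf_half.
case: (boolP (odd N)) => ho /=.
  rewrite big_ord_recr /=; congr (_ + _).
  have -> : (2 * N./2).+1 = N by rewrite mul2n odd_halfK // prednK // odd_gt0.
  by [].
by rewrite addr0 add0n.
Qed.

Lemma sum_gamma N : \sum_(n < N.+1) gamma n =
  xr 0 ^+ 3 + \sum_(s < N) 3%:R ^+ s * c3 (s.+1)./2 s + kap N.
Proof.
elim: N => [|N IH].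
  by rewrite big_ord_recr big_ord0 /= /kap /= add0r big_ord0 !addr0.
rewrite big_ord_recr /= IH big_ord_recr /=.
case: N IH => [|N] IH.
  by rewrite /gamma /kap /= c3_0 big_ord0 !mulr0 !addr0.
by rewrite /gamma /=; ring.
Qed.

Lemma sum_pick (G : nat -> rat) (c N : nat) :
  \sum_(q < N) (if nat_of_ord q == c then G q else 0) = if (c < N)%N then G c else 0.
Proof.
case: ltnP => hc.
  rewrite (bigD1 (Ordinal hc)) //= eqxx big1 ?addr0 // => i /negP hi.
  case: eqP => // e; exfalso; apply: hi; apply/eqP/val_inj; by rewrite /= e.
apply: big1 => i _; case: eqP => // e; exfalso.
by move: (ltn_ord i); rewrite e ltnNge hc.
Qed.

Definition LoY N := \sum_(p < N) \sum_(q < N)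
   (if (p < q)%N then 3%:R ^+ (p + q).+1 * xr p * ar q else 0).

Lemma beta_pairs N (n : 'I_N) : beta n = \sum_(p < N) \sum_(q < N)
   (if (p < q)%N && ((p + q).+1 == n)%N then 3%:R ^+ n * xr p * ar q else 0).
Proof.
have hn := ltn_ord n.
rewrite /beta mulr_sumr -(sum_widen (fun p => 3%:R ^+ n * (xr p * ar (n.-1 - p))) (N := N));
  last by rewrite -divn2; lia.
apply: eq_bigr => p _.
rewrite (eq_bigr (fun q : 'I_N => if nat_of_ord q == (n.-1 - p)%N then
   (if (p < (nat_of_ord n)./2)%N then 3%:R ^+ n * xr p * ar q else 0) else 0)); last first.
  move=> q _.
  case: (boolP ((p < q)%N && ((p + q).+1 == n)%N)) => hc.
    have -> : (nat_of_ord q == (n.-1 - p)%N)%N = true by apply/eqP; lia.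
    have -> : (p < (nat_of_ord n)./2)%N = true by rewrite -divn2; lia.
    by [].
  case: (eqVneq (nat_of_ord q) ((n.-1 - p)%N)) => // e.
  case: ifP => // h.
  by exfalso; move/negP: hc; apply; rewrite -divn2 in h; apply/andP; split; lia.
rewrite (sum_pick (fun q => if (p < (nat_of_ord n)./2)%N then 3%:R ^+ n * xr p * ar q else 0)) (_ : (n.-1 - p < N)%N = true); last by lia.
by case: ifP => _; rewrite ?mulr0 // mulrA.
Qed.

Lemma Lo_dv N : dv N (LoY N - \sum_(n < N) beta n).
Proof.
rewrite (eq_bigr _ (fun n _ => beta_pairs n)) exchange_big /=.
rewrite (eq_bigr (fun p : 'I_N => \sum_(q < N) (if (p < q)%N && ((p + q).+1 < N)%N
     then 3%:R ^+ (p + q).+1 * xr p * ar q else 0))); last first.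
  move=> p _; rewrite exchange_big /=; apply: eq_bigr => q _.
  rewrite (eq_bigr (fun n : 'I_N => if nat_of_ord n == (p + q).+1 then
     (if (p < q)%N then 3%:R ^+ (p + q).+1 * xr p * ar q else 0) else 0)); last first.
    move=> n _; case: (eqVneq (nat_of_ord n) (p + q).+1) => [->|ne]; first by rewrite andbT.
    by rewrite andbF.
  rewrite (sum_pick (fun _ => if (p < q)%N then 3%:R ^+ (p + q).+1 * xr p * ar q else 0)); case: (ltnP p q) => h /=; case: ifP => //.
rewrite /LoY -sumrB; apply: dv_sum => p _; rewrite -sumrB; apply: dv_sum => q _.
case: ifP => h1 /=; last by rewrite subr0; apply: dv0.
case: ifP => h2; first by rewrite subrr; apply: dv0.
rewrite subr0 -mulrA; apply: dv_pow; first by move/negbT: h2; rewrite -leqNgt.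
by apply: isZ_mul; apply: isZ_nat.
Qed.

Lemma isZ_c3 J s : isZ (c3 J s).
Proof. exact: (intpoly_exp 3 (intpoly_XP x J)). Qed.

Lemma key_dv M : (forall k, isZ (Ak a x k)) ->
  dv M.+1 (T M.+1 ^+ 3 + 3%:R * U M.+1 * T M.+1 - \sum_(n < M.+1) Lhs a x n * 3%:R ^+ n).
Proof.
move=> hA; set N := M.+1.
pose g m := 3%:R ^+ (2 * m).+1 * xr m * (Ak a x m - xr 0 * xr m).
have hQ : \sum_(n < N) Lhs a x n * 3%:R ^+ n = \sum_(m < N./2) g m + \sum_(n < N) beta n
   + (xr 0 ^+ 3 + \sum_(s < M) 3%:R ^+ s * c3 (s.+1)./2 s + kap M).
  rewrite (eq_bigr (fun n : 'I_N => alpha n + beta n + gamma n) (fun n _ => Lhs_split n)) big_split big_split /= sum_alpha sum_gamma //.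
have hY : T N ^+ 3 + 3%:R * U N * T N = \sum_(m < N) g m + xr 0 ^+ 3
   + \sum_(s < (3 * N).+1) c3 (minn N (s.+1)./2) s * 3%:R ^+ s + LoY N.
  rewrite T3_decomp UT_decomp -/(LoY N).
  have -> : \sum_(m < N) g m + xr 0 ^+ 3 = \sum_(m < N) (3%:R * xr m * 3%:R ^+ m * Rpre m
                 - 3%:R ^+ (2 * m).+1 * xr m ^+ 2 * xr 0 + (if nat_of_ord m == 0%N then xr 0 ^+ 3 else 0))
      + \sum_(m < N) 3%:R * xr m * 3%:R ^+ m * U m.+1.
    rewrite -big_split /= [RHS](eq_bigr (fun i : 'I_N => g i + (if nat_of_ord i == 0%N then xr 0 ^+ 3 else 0))).
      rewrite big_split /=; congr (_ + _).
      by rewrite big_ord_recl /= big1 ?addr0 // => i _.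
    move=> i _; rewrite /g.
    have e := A_closed i.
    have e2 : 3%:R ^+ (2 * i).+1 = 3%:R * 3%:R ^+ i * 3%:R ^+ i :> rat.
      by rewrite exprS mul2n -addnn exprD mulrA.
    rewrite e2 (_ : Rpre i = 3%:R ^+ i * Ak a x i - U i.+1); last by rewrite e addrC addKr.
    set C := (if _ then _ else _); set P := (3%:R ^+ i : rat); set A := Ak a x i; set Ui := U i.+1; ring.
  ring.
rewrite hY hQ.
have D1 : dv N (\sum_(m < N) g m - \sum_(m < N./2) g m).
  have hh : (N./2 <= N)%N by rewrite -divn2; lia.
  rewrite -(big_mkord xpredT g) (big_cat_nat (leq0n _) hh) /= big_mkord (_ : forall u v : rat, u + v - u = v); last by move=> u v; ring.
  rewrite big_nat_cond; apply: dv_sum => m /andP [/andP [hm _] _]; rewrite /g -mulrA; apply: dv_pow.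
    by have := half_bound N; lia.
  by apply: isZ_mul; [apply: isZ_nat | apply: isZ_sub; [exact: hA | apply: isZ_mul; apply: isZ_nat]].
have D3 := Lo_dv N.
have D2 : dv N (\sum_(s < (3 * N).+1) c3 (minn N (s.+1)./2) s * 3%:R ^+ s
            - \sum_(s < M) 3%:R ^+ s * c3 (s.+1)./2 s - kap M).
  have hM : (M <= (3 * N).+1)%N by rewrite /N; lia.
  rewrite -(big_mkord xpredT (fun s => c3 (minn N (s.+1)./2) s * 3%:R ^+ s)).
  rewrite (big_cat_nat (leq0n _) hM) /= big_mkord.
  rewrite (eq_bigr (fun s : 'I_M => 3%:R ^+ s * c3 (s.+1)./2 s)); last first.
    move=> s _; rewrite mulrC; congr (_ * c3 _ _).
    apply/minn_idPr; have := ltn_ord s; have [_ hb] := half_bound s.+1; move: hb => /=; rewrite /N; lia.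
  rewrite addrC addrK.
  rewrite big_ltn; last by rewrite /N; lia.
  have -> : minn N M.+1./2 = N./2 by apply/minn_idPr; have [_ hb] := half_bound N; move: hb; rewrite /N /=; lia.
  have [z hz] := mod3_c3 x N./2 M.
  set S := \sum_(_ <= _ < _) _.
  have -> : c3 N./2 M * 3%:R ^+ M + S - kap M = 3%:R ^+ N * z%:~R + S.
    rewrite /kap /c3 -/N.
    have ec : (modn M 3 == 0)%N && (divn M 3 < N./2)%N = (modn M 3 == 0)%N && (0 < M)%N.
      apply/idP/idP => /andP [h1 h2]; apply/andP; split => //; move: h2; have := half_bound N; rewrite /N /=; lia.
    rewrite ec in hz; move: hz; case: ifP => _ hz.
      rewrite -[(XP x N./2 ^+ 3)`_M](subrK ((x (divn M 3))%:R ^+ 3)) hz /N (exprS _ M); ring.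
    by rewrite subr0 in hz; rewrite subr0 hz /N (exprS _ M); ring.
  apply: dv_add; first by exists z.
  rewrite /S big_nat_cond; apply: dv_sum => s /andP [/andP [hs _] _]; rewrite mulrC; apply: dv_pow; last exact: isZ_c3.
  by move: hs; rewrite /N; lia.
have := dv_add (dv_add D1 D2) D3.
set A1 := \sum_(m < N) g m. set A2 := \sum_(m < N./2) g m.
set B1 := \sum_(s < (3 * N).+1) _. set B2 := \sum_(s < M) _.
set C1 := \sum_(n < N) beta n.
by congr (dv N _); ring.
Qed.
End Core.


Lemma trunc_cast (d : nat -> nat) N :
  (trunc3 d N)%:~R = \sum_(i < N) ((d i)%:R : rat) * 3%:R ^+ i.
Proof.
rewrite /trunc3 rmorph_sum; apply: eq_bigr => i _.
by rewrite rmorphM rmorphXn /=.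
Qed.

Lemma Mn_closed a b x N : 3%:R ^+ N * Mn a b x N =
  \sum_(n < N) Lhs a x n * 3%:R ^+ n - \sum_(n < N) ((b n)%:R : rat) * 3%:R ^+ n.
Proof.
elim: N => [|N IH]; first by rewrite /= !big_ord0 mulr0 subrr.
rewrite !big_ord_recr /= exprS.
have -> : 3%:R * 3%:R ^+ N * ((Lhs a x N + Mn a b x N - (b N)%:R) / 3%:R)
   = 3%:R ^+ N * Mn a b x N + 3%:R ^+ N * (Lhs a x N - (b N)%:R) :> rat by field.
rewrite IH; ring.
Qed.

Lemma X_rel a b x N : (forall k, isZ (Ak a x k)) ->
  exists w : int, ((trunc3 x N ^+ 3 + 3 * trunc3 a N * trunc3 x N - trunc3 b N)%:~R : rat)
    = 3%:R ^+ N * (w%:~R + Mn a b x N).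
Proof.
move=> hA.
case: N => [|M].
  exists 0; rewrite /trunc3 !big_ord0 /= (_ : (0 ^+ 3 + 3 * 0 * 0 - 0 : int) = 0) // rmorph0 expr0 mul1r addr0 //.
have [w hw] := key_dv M hA.
exists w.
rewrite (_ : trunc3 x M.+1 ^+ 3 = trunc3 x M.+1 * trunc3 x M.+1 * trunc3 x M.+1);
  last by rewrite !exprS expr0 mulr1 mulrA.
rewrite intrB intrD !intrM !trunc_cast.
rewrite -/(T x M.+1) -/(U a M.+1) mulrDr -hw Mn_closed.
have -> : ((3 : int)%:~R : rat) = 3%:R by [].
ring.
Qed.


Lemma Lhs_even a x j : (1 <= j)%N -> Lhs a x (2 * j) = Eeven a x j + Sji x (2 * j) j.
Proof.
case: j => // j _; have e : (2 * j.+1 = (2 * j).+2)%N by rewrite mulnS.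
by rewrite e /= mul2n odd_double doubleK -mul2n -e /=.
Qed.

Lemma Lhs_odd a x j : (1 <= j)%N -> Lhs a x (2 * j).+1 =
  (Ak a x j - (x 0%N)%:R * (x j)%:R) * (x j)%:R + Eodd a x j + Sji x (2 * j).+1 j.
Proof.
case: j => // j _; have e : ((2 * j.+1).+1 = (2 * j).+3)%N by rewrite mulnS.
rewrite e /= mul2n odd_double uphalf_double -mul2n -e /=.
by [].
Qed.

Lemma cong3_step a b x n :
  cong3 (Lhs a x n + Mn a b x n) (b n)%:R <-> isZ (Mn a b x n.+1).
Proof.
rewrite /cong3 /=; split => -[z hz]; exists z.
  by rewrite hz; field.
by rewrite -hz; field.
Qed.

Lemma three_int N : (((3 : int) ^+ N)%:~R : rat) = 3%:R ^+ N.
Proof. by rewrite rmorphXn. Qed.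

Theorem theorem3p9 (a b x : nat -> nat) :
  digits3 a -> a 0%N <> 0%N ->
  digits3 b -> b 0%N <> 0%N ->
  digits3 x -> x 0%N <> 0%N ->
  (forall k : nat, cong3 (Ak a x k) 0) ->
  (solves_cubic3 a b x <->
   [/\ cong3 ((x 0%N)%:R ^+ 3) (b 0%N)%:R,
       cong3 ((x 0%N)%:R * (a 0%N)%:R + Mn a b x 1) (b 1%N)%:R &
       forall j : nat, (1 <= j)%N ->
         cong3 (Eeven a x j + Sji x (2 * j) j + Mn a b x (2 * j)) (b (2 * j)%N)%:R /\
         cong3 ((Ak a x j - (x 0%N)%:R * (x j)%:R) * (x j)%:R + Eodd a x j
                + Sji x (2 * j).+1 j + Mn a b x (2 * j).+1) (b (2 * j).+1)%:R]).
Proof.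
move=> _ _ _ _ _ _ hA.
have hAZ : forall k, isZ (Ak a x k).
  move=> k; have [z hz] := hA k; exists (3 * z).
  by rewrite subr0 in hz; rewrite hz intrM.
have step1 : solves_cubic3 a b x <-> forall N, isZ (Mn a b x N).
  split.
    move=> hs N; have := hs N => /dvdzP [q hq].
    have [w hw] := X_rel b N hAZ.
    exists (q - w); rewrite hq intrM three_int in hw.
    have h3 : (3%:R ^+ N : rat) != 0 by rewrite expf_neq0 // pnatr_eq0.
    apply: (mulfI h3); rewrite intrB mulrBr [3%:R ^+ N * q%:~R]mulrC hw; ring.
  move=> hM N; have [m hm] := hM N; have [w hw] := X_rel b N hAZ.
  apply/dvdzP; exists (w + m); apply: (@intr_inj rat).
  by rewrite hw hm intrM three_int intrD mulrC.
rewrite step1; split.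
  move=> hM; split.
  - by have := (cong3_step a b x 0).2 (hM 1); rewrite /= addr0.
  - exact: ((cong3_step a b x 1).2 (hM 2)).
  - move=> j hj; split.
      by rewrite -Lhs_even //; apply: (cong3_step a b x (2 * j)).2.
    by rewrite -Lhs_odd //; apply: (cong3_step a b x (2 * j).+1).2.
case=> h0 h1 hj.
have hS : forall n, isZ (Mn a b x n.+1).
  move=> n; apply: (cong3_step a b x n).1.
  case: n => [|[|k]].
  - by rewrite /= addr0.
  - exact: h1.
  - have [j [hj1 [e|e]]] : exists j, (1 <= j)%N /\ (k.+2 = 2 * j \/ k.+2 = (2 * j).+1)%N.
      exists (k.+2)./2; have := half_bound k.+2; case: (boolP (odd k.+2)) => ho.
        move=> _; split; first by rewrite /=; lia.
        by right; rewrite mul2n odd_halfK // prednK.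
      move=> _; split; first by rewrite /=; lia.
      by left; rewrite mul2n even_halfK.
    + by rewrite e Lhs_even //; case: (hj j hj1).
    + by rewrite e Lhs_odd //; case: (hj j hj1).
by case => [|n]; [exists 0 | exact: hS].
Qed.
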